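(* Let $X$ be a finite alphabet with at least two letters and $k\ge2$. For every $F\in\mathcal F_{\mathcal T_k}$, the class $\mathcal R\mathbf\Sigma(F)$ is closed under $\le_{DA}$ and the class $\mathcal A\mathbf\Sigma(F)$ is closed under $\le_{AA}$; that is, if $B\le_{DA}A\in\mathcal R\mathbf\Sigma(F)$ then $B\in\mathcal R\mathbf\Sigma(F)$, and if $B\le_{AA}A\in\mathcal A\mathbf\Sigma(F)$ then $B\in\mathcal A\mathbf\Sigma(F)$.
   Context: $\bar k=\{0,\dots,k-1\}$; $\mathcal R$ ($\mathcal A$) is the class of regular (aperiodic) $\omega$-languages over $X$ (recognised by deterministic Muller acceptors, resp. with aperiodic automaton). Forests are finite $F\subseteq\omega^+$ closed under nonempty prefixes (prefix order), trees finite prefix-closed $V\subseteq\omega^*$; $\mathcal T_k$ = $\bar k$-labeled trees; $\mathcal F_{\mathcal T_k}$ = forests $(F,c)$ labeled by elements of $\mathcal T_k$. For a 2-base $\mathcal L=(\mathcal L_0,\mathcal L_1)$ in $S$ and $(F,c)\in\mathcal F_{\mathcal T_k}$, an $F$-family is $\{U_\tau\}_{\tau\in F}\subseteq\mathcal L_0$ with $U_{\tau i}\subseteq U_\tau$, $\bigcup U_\tau=S$, together with, for each $\tau$ with $c(\tau)=(V,v)$, sets $U_{\tau\sigma}=\tilde U_\tau\cap B_{\tau\sigma}$, $B_{\tau\sigma}\in\mathcal L_1$, $\sigma\in V$, with $U_{\tau\sigma i}\subseteq U_{\tau\sigma}$ and $\bigcup_\sigma U_{\tau\sigma}=\tilde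 U_\tau$, where $\tilde U_\tau=U_\tau\setminus\bigcup_{\tau i\in F}U_{\tau i}$; it determines $A:S\to\bar k$ if $A(x)=v(\sigma)$ whenever $x\in U_{\tau\sigma}\setminus\bigcup_{\sigma i\in V}U_{\tau\sigma i}$. $\mathcal L(F)$ is the set of $k$-partitions determined by some $F$-family. $\mathcal R\mathbf\Sigma=(\mathcal R\cap\mathbf\Sigma^0_1,\mathcal R\cap\mathbf\Sigma^0_2)$ and $\mathcal A\mathbf\Sigma=(\mathcal A\cap\mathbf\Sigma^0_1,\mathcal A\cap\mathbf\Sigma^0_2)$, where $\mathbf\Sigma^0_1$ are the open sets and $\mathbf\Sigma^0_2$ the countable unions of closed sets of $X^\omega$. DA-functions (AA-functions) are functions $X^\omega\to X^\omega$ computed by asynchronous transducers (automaton plus output $g:Q\times X\to X^*$; with aperiodic automaton for AA); $B\le_{DA}A$ ($B\le_{AA}A$) iff $B=A\circ h$ for some such $h$. *)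

(* Defs.v *)
From mathcomp Require Import all_boot.
Set Implicit Arguments.
Unset Strict Implicit.
Unset Printing Implicit Defensive.

Definition word (X : finType) := nat -> X.
Definition olang (X : finType) := word X -> Prop.

Definition is_open (X : finType) (U : olang X) : Prop :=
  forall a, U a -> exists n, forall b : word X, (forall i, i < n -> b i = a i) -> U b.
Definition is_closed (X : finType) (C : olang X) : Prop :=
  is_open (fun a => ~ C a).
Definition is_sigma02 (X : finType) (U : olang X) : Prop :=
  exists C : nat -> olang X, (forall n, is_closed (C n)) /\
    forall a, U a <-> exists n, C n a.

Fixpoint run (X Q : finType) (delta : Q -> X -> Q) (q0 : Q) (a : word X) (n : nat) : Q :=
  match n with 0 => q0 | m.+1 => delta (run delta q0 a m) (a m) end.

Definition inf_often (Q : finType) (r : nat -> Q) (q : Q) : Prop :=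
  forall n, exists m, n <= m /\ r m = q.

Definition muller_accepts (Q : finType) (Acc : {set {set Q}}) (r : nat -> Q) : Prop :=
  exists S, S \in Acc /\ forall q, q \in S <-> inf_often r q.

Definition delta_star (X Q : finType) (delta : Q -> X -> Q) (q : Q) (u : seq X) : Q :=
  foldl delta q u.

(** aperiodic automaton: its transition monoid is aperiodic *)
Definition aperiodic (X Q : finType) (delta : Q -> X -> Q) : Prop :=
  exists n, forall (u : seq X) (q : Q),
    delta_star delta q (flatten (nseq n u)) = delta_star delta q (flatten (nseq n.+1 u)).

Definition regular (X : finType) (L : olang X) : Prop :=
  exists (Q : finType) (q0 : Q) (delta : Q -> X -> Q) (Acc : {set {set Q}}),
    forall a, L a <-> muller_accepts Acc (run delta q0 a).

Definition aperiodic_lang (X : finType) (L : olang X) : Prop :=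
  exists (Q : finType) (q0 : Q) (delta : Q -> X -> Q) (Acc : {set {set Q}}),
    aperiodic delta /\ forall a, L a <-> muller_accepts Acc (run delta q0 a).

Definition tout (X Q : finType) (delta : Q -> X -> Q) (g : Q -> X -> seq X)
  (q0 : Q) (a : word X) (m : nat) : seq X :=
  flatten [seq g (run delta q0 a i) (a i) | i <- iota 0 m].

Definition computes (X Q : finType) (delta : Q -> X -> Q) (g : Q -> X -> seq X)
  (q0 : Q) (h : word X -> word X) : Prop :=
  forall a n, exists m, onth (tout delta g q0 a m) n = Some (h a n).

Definition DA_fun (X : finType) (h : word X -> word X) : Prop :=
  exists (Q : finType) (q0 : Q) (delta : Q -> X -> Q) (g : Q -> X -> seq X),
    computes delta g q0 h.

Definition AA_fun (X : finType) (h : word X -> word X) : Prop :=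
  exists (Q : finType) (q0 : Q) (delta : Q -> X -> Q) (g : Q -> X -> seq X),
    aperiodic delta /\ computes delta g q0 h.

Definition le_DA (X : finType) (k : nat) (B A : word X -> 'I_k) : Prop :=
  exists h, DA_fun h /\ B = A \o h.
Definition le_AA (X : finType) (k : nat) (B A : word X -> 'I_k) : Prop :=
  exists h, AA_fun h /\ B = A \o h.

(** A k-labeled tree: a finite prefix-closed V (list of seq nat) and labels
    v : V -> 'I_k (values outside V are irrelevant). *)
Record ltree (k : nat) := LTree { lt_dom : seq (seq nat); lt_lab : seq nat -> 'I_k }.

Definition is_tree (V : seq (seq nat)) : Prop :=
  forall (s : seq nat) (i : nat), rcons s i \in V -> s \in V.

Definition is_forest (F : seq (seq nat)) : Prop :=
  (forall s, s \in F -> s != [::]) /\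
  (forall (s : seq nat) (i : nat), rcons s i \in F -> s != [::] -> s \in F).

Definition is_lforest (k : nat) (F : seq (seq nat)) (c : seq nat -> ltree k) : Prop :=
  is_forest F /\ forall t, t \in F -> is_tree (lt_dom (c t)).

Definition determines (X : finType) (k : nat) (L0 L1 : olang X -> Prop)
  (F : seq (seq nat)) (c : seq nat -> ltree k) (A : word X -> 'I_k) : Prop :=
  exists (U : seq nat -> olang X) (B : seq nat -> seq nat -> olang X),
    let Ut t x := U t x /\ ~ (exists i, rcons t i \in F /\ U (rcons t i) x) in
    let W t s x := Ut t x /\ B t s x in
    (forall t, t \in F -> L0 (U t)) /\
        (forall t i x, t \in F -> rcons t i \in F -> U (rcons t i) x -> U t x) /\
        (forall x, exists t, t \in F /\ U t x) /\
        (forall t s, t \in F -> s \in lt_dom (c t) -> L1 (B t s)) /\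
        (forall t s i x, t \in F -> s \in lt_dom (c t) -> rcons s i \in lt_dom (c t) ->
            W t (rcons s i) x -> W t s x) /\
        (forall t x, t \in F -> (Ut t x <-> exists s, s \in lt_dom (c t) /\ W t s x)) /\
      (forall t s x, t \in F -> s \in lt_dom (c t) -> W t s x ->
            ~ (exists i, rcons s i \in lt_dom (c t) /\ W t (rcons s i) x) ->
            A x = lt_lab (c t) s).

(** R Sigma = (R cap Sigma^0_1, R cap Sigma^0_2), A Sigma likewise *)
Definition RS0 (X : finType) (U : olang X) := regular U /\ is_open U.
Definition RS1 (X : finType) (U : olang X) := regular U /\ is_sigma02 U.
Definition AS0 (X : finType) (U : olang X) := aperiodic_lang U /\ is_open U.
Definition AS1 (X : finType) (U : olang X) := aperiodic_lang U /\ is_sigma02 U.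

Definition RSigmaF (X : finType) (k : nat) (F : seq (seq nat)) (c : seq nat -> ltree k)
  (A : word X -> 'I_k) : Prop := determines (@RS0 X) (@RS1 X) F c A.
Definition ASigmaF (X : finType) (k : nat) (F : seq (seq nat)) (c : seq nat -> ltree k)
  (A : word X -> 'I_k) : Prop := determines (@AS0 X) (@AS1 X) F c A.

(* Main.v *)
Require Import Defs.
From mathcomp Require Import all_boot.
From mathcomp Require Import zify.
From Stdlib Require Import Classical ClassicalEpsilon.

Set Implicit Arguments.
Unset Strict Implicit.
Unset Printing Implicit Defensive.

Definition pb (P : Prop) : bool := if excluded_middle_informative P then true else false.
Lemma pbP P : reflect P (pb P).
Proof. rewrite /pb; case: excluded_middle_informative => H; by constructor. Qed.

Section Gen.
Variables (X Q P : finType) (delta : Q -> X -> Q) (g : Q -> X -> seq X) (q0 : Q).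
Variables (gam : P -> X -> P) (p0 : P).

Notation T a m := (tout delta g q0 a m).

Lemma toutS a m : T a m.+1 = T a m ++ g (run delta q0 a m) (a m).
Proof. by rewrite /tout -addn1 iotaD map_cat flatten_cat /= cats0. Qed.

Lemma tout_prefix a m d : exists w, T a (m + d) = T a m ++ w.
Proof.
elim: d => [|d [w IH]]; first by exists [::]; rewrite addn0 cats0.
by exists (w ++ g (run delta q0 a (m+d)) (a (m+d))); rewrite addnS toutS IH catA.
Qed.

Lemma tout_size_mono a m m' : m <= m' -> size (T a m) <= size (T a m').
Proof.
move=> H; rewrite -(subnKC H); have [w ->] := tout_prefix a m (m'-m).
by rewrite size_cat leq_addr.
Qed.

Lemma run_ext (Z : finType) (f : Z -> X -> Z) z a b m :
  (forall i, i < m -> a i = b i) -> run f z a m = run f z b m.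
Proof. elim: m => //= m IH H; rewrite IH ?H // => i Hi; apply: H; lia. Qed.

Lemma tout_ext a b m : (forall i, i < m -> a i = b i) -> T a m = T b m.
Proof.
elim: m => // m IH H; rewrite !toutS IH ?H ?(@run_ext _ _ _ a b) // => i Hi; apply: H; lia.
Qed.

Variable h : word X -> word X.
Hypothesis Hc : computes delta g q0 h.

Lemma tout_nth a m i x0 : i < size (T a m) -> nth x0 (T a m) i = h a i.
Proof.
move=> Hi; have [m' Hm'] := Hc a i.
have Hi' : i < size (T a m') by rewrite -onthTE Hm'.
have [w1 E1] := tout_prefix a m m'.
have [w2 E2] := tout_prefix a m' m.
have : onth (T a m ++ w1) i = onth (T a m' ++ w2) i by rewrite -E1 -E2 addnC.
by rewrite !onth_cat Hi Hi' Hm' => /(onth_nth x0).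
Qed.

Lemma tout_unbounded a n : exists m, n <= size (T a m).
Proof.
have [m Hm] := Hc a n; exists m.
have : n < size (T a m) by rewrite -onthTE Hm.
lia.
Qed.

Lemma find_interval_aux a d : forall n j, size (T a n) < j -> j <= size (T a (n + d)) ->
  exists m, n <= m /\ size (T a m) < j <= size (T a m.+1).
Proof.
elim: d => [|d IH] n j Hj HM.
  rewrite addn0 in HM; lia.
case: (leqP j (size (T a n.+1))) => H.
  by exists n; split => //; apply/andP.
have [|m [Hm1 Hm2]] := IH n.+1 j H; first by rewrite addSnnS.
by exists m; split => //; lia.
Qed.

Lemma find_interval a n j : size (T a n) < j ->
  exists m, n <= m /\ size (T a m) < j <= size (T a m.+1).
Proof.
move=> Hj; have [M HM] := tout_unbounded a j.
have HnM : n <= M.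
  case: (leqP n M) => // H; have := tout_size_mono a (ltnW H); lia.
apply: (@find_interval_aux a (M - n)) => //; by rewrite subnKC.
Qed.

Fixpoint visited (p : P) (s : seq X) : {set P} :=
  if s is y :: s' then gam p y |: visited (gam p y) s' else set0.

Lemma ds_run (b : word X) s : (forall i, i < size s -> nth (b 0) s i = b i) ->
  delta_star gam p0 s = run gam p0 b (size s).
Proof.
elim/last_ind: s => [//|s y IH] H.
rewrite /delta_star foldl_rcons size_rcons /=.
have Hy : y = b (size s) by rewrite -H ?size_rcons // nth_rcons ltnn eqxx.
rewrite /delta_star in IH; rewrite IH ?Hy // => i Hi.
rewrite -(H i); first by rewrite nth_rcons Hi.
by rewrite size_rcons; lia.
Qed.

Lemma visitedP b n s p' : (forall i, i < size s -> nth (b 0) s i = b (n + i)) ->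
  (p' \in visited (run gam p0 b n) s <->
   exists j, n < j <= n + size s /\ run gam p0 b j = p').
Proof.
elim: s n => [|y s IH] n H /=.
  rewrite in_set0; split => // -[j [Hj _]]; lia.
have Hy : y = b n by rewrite -[n]addn0 -H.
have E : gam (run gam p0 b n) y = run gam p0 b n.+1 by rewrite /= Hy.
rewrite E in_setU1.
have H' : forall i, i < size s -> nth (b 0) s i = b (n.+1 + i).
  by move=> i Hi; rewrite addSnnS -H.
split.
  case/orP => [/eqP -> | /(IH _ H') [j [Hj Hr]]].
    by exists n.+1; split => //; lia.
  by exists j; split => //; lia.
move=> [j [Hj Hr]].
have [Ej|Nj] := eqVneq j n.+1; first by rewrite -Hr Ej eqxx.
apply/orP; right; apply/(IH _ H'); exists j; split => //; lia.
Qed.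

Definition Qp := (Q * P * {set P})%type.
Definition dprod (t : Qp) (x : X) : Qp :=
  (delta t.1.1 x, delta_star gam t.1.2 (g t.1.1 x), visited t.1.2 (g t.1.1 x)).
Definition Accp (Acc : {set {set P}}) : {set {set Qp}} :=
  [set S : {set Qp} | \bigcup_(t in S) t.2 \in Acc].

Lemma run_prod1 a m :
  (run dprod (q0, p0, set0) a m).1 = (run delta q0 a m, delta_star gam p0 (T a m)).
Proof.
elim: m => //= m IH; rewrite /dprod IH /= toutS /delta_star foldl_cat //.
Qed.

Lemma run_prod2 a m : (run dprod (q0, p0, set0) a m.+1).2 =
  visited (delta_star gam p0 (T a m)) (g (run delta q0 a m) (a m)).
Proof. by rewrite /= /dprod run_prod1. Qed.

Lemma S_mem a m p' : p' \in (run dprod (q0, p0, set0) a m.+1).2 <->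
  exists j, size (T a m) < j <= size (T a m.+1) /\ run gam p0 (h a) j = p'.
Proof.
rewrite run_prod2 (@ds_run (h a)); last by move=> i Hi; rewrite tout_nth.
rewrite toutS size_cat; apply: visitedP => i Hi.
have := @tout_nth a m.+1 (size (T a m) + i) (h a 0).
rewrite (toutS a m) nth_cat.
have -> : (size (T a m) + i < size (T a m)) = false by rewrite ltnNge leq_addr.
rewrite addKn size_cat; apply; lia.
Qed.

Lemma pigeon (Z : finType) (r : nat -> Z) (Pr : pred Z) :
  (forall n, exists m, n <= m /\ Pr (r m)) -> exists t, Pr t /\ inf_often r t.
Proof.
suff H0 : forall l : seq Z, (forall n, exists m, n <= m /\ Pr (r m) /\ r m \in l) ->
    exists t, Pr t /\ inf_often r t.
  move=> H; apply: (H0 (enum Z)) => n; have [m [? ?]] := H n.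
  by exists m; rewrite mem_enum.
elim => [|x l IH] H.
  by have [m [_ [_]]] := H 0; rewrite in_nil.
case: (classic (Pr x /\ inf_often r x)) => [Hx|Hx]; first by exists x.
apply: IH.
case: (boolP (Pr x)) => Px.
  have : ~ inf_often r x by move=> HH; apply: Hx.
  move/not_all_ex_not => [n0 Hn0] n.
  have [m [Hm [Pm Lm]]] := H (maxn n n0).
  exists m; split; first lia.
  split => //; move: Lm; rewrite in_cons => /orP [/eqP E|//].
  exfalso; apply: Hn0; exists m; split => //; lia.
move=> n; have [m [Hm [Pm Lm]]] := H n; exists m; split => //; split => //.
move: Lm; rewrite in_cons => /orP [/eqP E|//]; by move: Pm; rewrite E (negbTE Px).
Qed.

Lemma inf_S_to_r a t p : inf_often (run dprod (q0, p0, set0) a) t -> p \in t.2 ->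
  inf_often (run gam p0 (h a)) p.
Proof.
move=> Ht Hp n; have [M HM] := tout_unbounded a n.
have [m [Hm Hr]] := Ht M.+1.
case: m Hm Hr => [//|m] Hm Hr.
move: Hp; rewrite -Hr => /S_mem [j [Hj Hjr]].
exists j; split => //; have := tout_size_mono a (m := M) (m' := m); lia.
Qed.

Lemma inf_r_to_S a p : inf_often (run gam p0 (h a)) p ->
  exists t, inf_often (run dprod (q0, p0, set0) a) t /\ p \in t.2.
Proof.
move=> Hp.
have [|t [H1 H2]] := @pigeon _ (run dprod (q0, p0, set0) a) (fun t => p \in t.2).
  move=> n; have [j [Hj Hjr]] := Hp (size (T a n)).+1.
  have [m [Hm Hi]] := @find_interval a n j Hj.
  by exists m.+1; split; [lia | apply/S_mem; exists j].
by exists t.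
Qed.

Lemma muller_iff (Z : finType) (Acc : {set {set Z}}) r :
  muller_accepts Acc r <-> [set q | pb (inf_often r q)] \in Acc.
Proof.
split.
  move=> [S [HS HSq]]; suff -> : [set q | pb (inf_often r q)] = S by [].
  apply/setP => q; rewrite inE.
  apply/idP/idP => [/pbP /HSq // | /HSq /pbP //].
move=> H; exists [set q | pb (inf_often r q)]; split => // q; rewrite inE.
exact: iff_sym (rwP (pbP _)).
Qed.

Lemma prod_muller (Acc : {set {set P}}) a :
  muller_accepts Acc (run gam p0 (h a)) <->
  muller_accepts (Accp Acc) (run dprod (q0, p0, set0) a).
Proof.
have E : [set q | pb (inf_often (run gam p0 (h a)) q)] =
   \bigcup_(t in [set q | pb (inf_often (run dprod (q0, p0, set0) a) q)]) t.2.
  apply/setP => p; rewrite inE; apply/idP/bigcupP.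
    move/pbP/inf_r_to_S => [t [Ht Hp]]; exists t => //; rewrite inE; exact/pbP.
  move=> [t]; rewrite inE => /pbP Ht Hp; apply/pbP; exact: inf_S_to_r Ht Hp.
split => /muller_iff H; apply/muller_iff.
  by rewrite inE -E.
by move: H; rewrite inE -E.
Qed.

End Gen.

Section Ap.
Variables (X Q P : finType) (delta : Q -> X -> Q) (g : Q -> X -> seq X).
Variables (gam : P -> X -> P).

Notation fl m u := (flatten (nseq m u)).

Lemma fl_S (u : seq X) m : fl m.+1 u = fl m u ++ u.
Proof. by rewrite -addn1 nseqD flatten_cat /= cats0. Qed.

Lemma ap_step (Z : finType) (f : Z -> X -> Z) N :
  (forall u z, delta_star f z (fl N u) = delta_star f z (fl N.+1 u)) ->
  forall m u z, N <= m -> delta_star f z (fl m u) = delta_star f z (fl m.+1 u).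
Proof.
move=> H m u z Hm; have := H u (delta_star f z (fl (m - N) u)).
by rewrite /delta_star -!foldl_cat -!flatten_cat -!nseqD addnS subnK.
Qed.

Lemma ap_const (Z : finType) (f : Z -> X -> Z) N :
  (forall u z, delta_star f z (fl N u) = delta_star f z (fl N.+1 u)) ->
  forall m u z, N <= m -> delta_star f z (fl m u) = delta_star f z (fl N u).
Proof.
move=> H; elim => [|m IH] u z Hm.
  by move: Hm; rewrite leqn0 => /eqP ->.
have [->|Hlt] := eqVneq N m.+1; first done.
rewrite -(@ap_step _ f N H) ?IH //; lia.
Qed.

Fixpoint outs (q : Q) (u : seq X) : seq X :=
  if u is x :: u' then g q x ++ outs (delta q x) u' else [::].

Lemma outs_cat q u v : outs q (u ++ v) = outs q u ++ outs (delta_star delta q u) v.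
Proof. by elim: u q => [|x u IH] q //=; rewrite IH catA. Qed.

Lemma outs_fix q u : delta_star delta q u = q ->
  forall j, outs q (fl j u) = fl j (outs q u).
Proof. by move=> Hq; elim => [|j IH] //=; rewrite outs_cat Hq IH. Qed.

Lemma ds_prod t u : (delta_star (dprod delta g gam) t u).1 =
  (delta_star delta t.1.1 u, delta_star gam t.1.2 (outs t.1.1 u)).
Proof.
elim: u t => [|x u IH] t /=; first by case: t => [[q p] S].
rewrite /delta_star /= in IH *; rewrite IH /dprod /= /delta_star foldl_cat //.
Qed.

Lemma dprod_congr s1 s2 w : s1.1 = s2.1 -> w != [::] ->
  delta_star (dprod delta g gam) s1 w = delta_star (dprod delta g gam) s2 w.
Proof.
case: w => [//|x v] E _; rewrite /delta_star /=; congr foldl; by rewrite /dprod E.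
Qed.

Lemma ap_prod : aperiodic delta -> aperiodic gam -> aperiodic (dprod delta g gam).
Proof.
move=> [N HN] [M HM]; exists (N + M).+1 => u t.
case: u => [|x v].
  by have E : forall n, fl n ([::] : seq X) = [::] by elim.
set u := x :: v.
set qN := delta_star delta t.1.1 (fl N u).
have HqN : delta_star delta qN u = qN.
  by rewrite /qN /delta_star -foldl_cat -fl_S; symmetry; apply: HN.
have E1 : forall m, (delta_star (dprod delta g gam) t (fl (N + m) u)).1 =
   (qN, delta_star gam (delta_star gam t.1.2 (outs t.1.1 (fl N u)))
          (fl m (outs qN u))).
  move=> m; rewrite ds_prod (@ap_const _ _ N HN) ?leq_addr //.
  by rewrite nseqD flatten_cat outs_cat -/qN (outs_fix HqN) /delta_star foldl_cat.
have E2 : (delta_star (dprod delta g gam) t (fl (N + M) u)).1 =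
          (delta_star (dprod delta g gam) t (fl (N + M).+1 u)).1.
  by rewrite -addnS !E1 HM.
have E3 : forall m, delta_star (dprod delta g gam) t (fl m.+1 u) =
    delta_star (dprod delta g gam) (delta_star (dprod delta g gam) t (fl m u)) u.
  by move=> m; rewrite fl_S /delta_star foldl_cat.
by rewrite (E3 (N + M)) (E3 (N + M).+1); apply: dprod_congr.
Qed.

End Ap.

Section Transfer.
Variable X : finType.

Lemma open_pre (h : word X -> word X) (U : olang X) :
  DA_fun h -> is_open U -> is_open (fun a => U (h a)).
Proof.
move=> [Q [q0 [d [g Hc]]]] HU a Ha; have [n Hn] := HU _ Ha.
have [m Hm] := tout_unbounded Hc a n.
exists m => b Hb; apply: Hn => i Hi.
have Hi' : i < size (tout d g q0 a m) by lia.
have E := tout_ext d g q0 Hb.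
rewrite -(tout_nth Hc (a 0) Hi') -E (tout_nth Hc) // E. exact Hi'.
Qed.

Lemma closed_pre (h : word X -> word X) (C : olang X) :
  DA_fun h -> is_closed C -> is_closed (fun a => C (h a)).
Proof. move=> Hh HC; exact: (open_pre (U := fun x => ~ C x)). Qed.

Lemma sigma_pre (h : word X -> word X) (U : olang X) :
  DA_fun h -> is_sigma02 U -> is_sigma02 (fun a => U (h a)).
Proof.
move=> Hh [C [HC HU]]; exists (fun n a => C n (h a)); split.
  by move=> n; apply: closed_pre.
by move=> a; apply: HU.
Qed.

Lemma regular_pre (h : word X -> word X) (L : olang X) :
  DA_fun h -> regular L -> regular (fun a => L (h a)).
Proof.
move=> [Q [q0 [d [g Hc]]]] [P [p0 [gam [Acc HL]]]].
exists (Qp Q P), (q0, p0, set0), (dprod d g gam), (Accp Q Acc) => a.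
split => [/HL /(prod_muller gam p0 Hc) // | /(prod_muller gam p0 Hc) /HL //].
Qed.

Lemma aperiodic_pre (h : word X -> word X) (L : olang X) :
  AA_fun h -> aperiodic_lang L -> aperiodic_lang (fun a => L (h a)).
Proof.
move=> [Q [q0 [d [g [Hd Hc]]]]] [P [p0 [gam [Acc [Hg HL]]]]].
exists (Qp Q P), (q0, p0, set0), (dprod d g gam), (Accp Q Acc); split.
  exact: ap_prod.
move=> a; split => [/HL /(prod_muller gam p0 Hc) // | /(prod_muller gam p0 Hc) /HL //].
Qed.

Lemma AA_DA (h : word X -> word X) : AA_fun h -> DA_fun h.
Proof. move=> [Q [q0 [d [g [_ Hc]]]]]; by exists Q, q0, d, g. Qed.

Lemma det_pre k (L0 L1 L0' L1' : olang X -> Prop) F (c : seq nat -> ltree k) A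
  (h : word X -> word X) :
  (forall V, L0 V -> L0' (fun x => V (h x))) ->
  (forall V, L1 V -> L1' (fun x => V (h x))) ->
  determines L0 L1 F c A -> determines L0' L1' F c (A \o h).
Proof.
move=> H0 H1 [U [B H]]; cbv zeta in H.
case: H => [HU0 [HU1 [HU2 [HB0 [HB1 [HB2 HA]]]]]].
exists (fun t x => U t (h x)), (fun t s x => B t s (h x)); cbv zeta.
split; first by move=> t Ht; apply: H0; apply: HU0.
split; first by move=> t i x; apply: HU1.
split; first by move=> x; apply: HU2.
split; first by move=> t s Ht Hs; apply: H1; apply: HB0.
split; first by move=> t s i x; apply: HB1.
split; first by move=> t x; apply: HB2.
by move=> t s x; apply: HA.
Qed.

End Transfer.

Theorem proposition4p12 (X : finType) (k : nat) (hX : 2 <= #|X|) (hk : 2 <= k)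
  (F : seq (seq nat)) (c : seq nat -> ltree k) (hF : is_lforest F c) :
  (forall A B : word X -> 'I_k, le_DA B A -> RSigmaF F c A -> RSigmaF F c B) /\
  (forall A B : word X -> 'I_k, le_AA B A -> ASigmaF F c A -> ASigmaF F c B).
Proof.
split => A B [h [Hh ->]]; apply: det_pre.
- by move=> V [H1 H2]; split; [apply: regular_pre | apply: open_pre].
- by move=> V [H1 H2]; split; [apply: regular_pre | apply: sigma_pre].
- by move=> V [H1 H2]; split;
    [apply: aperiodic_pre | apply: open_pre; first exact: AA_DA].
- by move=> V [H1 H2]; split;
    [apply: aperiodic_pre | apply: sigma_pre; first exact: AA_DA].
Qed.
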